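(* Let $\mu$ be strict and $\alpha\in\mathcal Q(\mu,\overline\mu)$, and let $m=m(\alpha)$. Then $\alpha$ can be written uniquely as $$\alpha=(b_1^m,b_2,b_3,\ldots)+(w^m)$$ with $w\ge0$, $b_1>b_2$, and $(b_1^m,b_2,b_3,\ldots)\in\mathcal Q(\mu,\mu+(1))$.
   Context: Partitions are weakly decreasing sequences of nonnegative integers with finitely many nonzero parts, identified with Ferrers boards. $\alpha$ contains $\mu$ if deleting some rows and some columns of the Ferrers board of $\alpha$ and top/left-justifying yields $\mu$; otherwise $\alpha$ avoids $\mu$. Strict: positive parts distinct. $m(\alpha)$ is the multiplicity of the largest part of $\alpha$. $\alpha+\beta$ is the componentwise sum; $(w^m)$ has $m$ parts equal to $w$. $\overline\mu=(\mu_1+1,\mu_1,\mu_2,\ldots)$. $\mathcal Q(\tau,\mu)$ is the set of partitions of positive weight containing $\tau$ and avoiding $\mu$. *)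

(* Defs.v *)
From mathcomp Require Import all_boot.
Set Implicit Arguments. Unset Strict Implicit. Unset Printing Implicit Defensive.

(* A partition is represented by the list of its positive parts, weakly
   decreasing (trailing zero parts are omitted). *)
Definition is_partition (s : seq nat) : bool :=
  sorted geq s && all (fun x => 0 < x) s.

Definition is_strict (s : seq nat) : bool := is_partition s && uniq s.

Definition weight (s : seq nat) : nat := sumn s.

Definition psum (s t : seq nat) : seq nat :=
  mkseq (fun i => nth 0 s i + nth 0 t i) (maxn (size s) (size t)).

Definition mult_largest (a : seq nat) : nat := count_mem (head 0 a) a.

Definition mubar (mu : seq nat) : seq nat := (head 0 mu).+1 :: mu.

(* Containment: keep the rows with (strictly increasing) indices rs and the
   columns with (strictly increasing) indices cs of the Ferrers board of a,
   delete all others, and top/left-justify. Row r_i of the result has length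
   #{ c in cs | c < a_{r_i} }. *)
Definition contains (a mu : seq nat) : Prop :=
  exists rs cs : seq nat,
    sorted ltn rs /\ sorted ltn cs /\
    [seq x <- [seq count (fun c => c < nth 0 a r) cs | r <- rs] | 0 < x] = mu.

Definition avoids (a mu : seq nat) : Prop := ~ contains a mu.

Definition inQ (tau mu a : seq nat) : Prop :=
  is_partition a /\ 0 < weight a /\ contains a tau /\ avoids a mu.

(* alpha = (b1^m, b2, b3, ...) + (w^m) with b1 > b2 and
   (b1^m, b2, b3, ...) in Q(mu, mu + (1)); bs = (b2, b3, ...). *)
Definition decomp (mu a : seq nat) (m b1 : nat) (bs : seq nat) (w : nat) : Prop :=
  is_partition bs /\ head 0 bs < b1 /\
  inQ mu (psum mu [:: 1]) (nseq m b1 ++ bs) /\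
  a = psum (nseq m b1 ++ bs) (nseq m w).

(* Main.v *)
Require Import Defs.
From mathcomp Require Import all_boot zify.
From Stdlib Require Import Classical.
Set Implicit Arguments. Unset Strict Implicit. Unset Printing Implicit Defensive.

Definition step (g : nat -> nat) := forall u, g u <= g u.+1 /\ g u.+1 <= (g u).+1.

Definition G (S nu : seq nat) := exists g, g 0 = 0 /\ step g /\
  forall y, y \in nu -> exists2 v, v \in S & g v = y.

Lemma step_mono g : step g -> forall u v, u <= v -> g u <= g v.
Proof.
move=> st; apply: (@homo_leq nat g leq) => //; first by move=> y x z; apply: leq_trans.
by move=> i; case: (st i).
Qed.

Definition F (cs : seq nat) v := count (fun c => c < v) cs.

Lemma F_S cs v : F cs v.+1 = F cs v + count_mem v cs.
Proof.
rewrite /F; elim: cs => //= c cs ->.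
case: (ltngtP c v) => [h|h|->].
- rewrite ltnS (ltnW h) /=; lia.
- rewrite ltnS leqNgt h /=; lia.
- rewrite ltnSn /=; lia.
Qed.

Lemma F0 cs : F cs 0 = 0.
Proof. by rewrite /F; elim: cs. Qed.

Lemma contains_G a nu : contains a nu -> G a nu.
Proof.
move=> [rs [cs [_ [Hcs Heq]]]].
have U : uniq cs by apply: (sorted_uniq ltn_trans ltnn).
exists (F cs); split; first exact: F0.
split.
  move=> u; rewrite F_S count_uniq_mem //; case: (u \in cs) => /=; lia.
move=> y; rewrite -Heq mem_filter => /andP [y0 /mapP [r _ yE]].
exists (nth 0 a r); last by rewrite yE.
case: (ltnP r (size a)) => h; first exact: mem_nth.
by move: y0; rewrite yE nth_default // -/(F cs 0) F0.
Qed.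

Lemma mem_sumn v a : v \in a -> v <= sumn a.
Proof. elim: a => //= x a IH; rewrite inE => /orP [/eqP ->|/IH]; lia. Qed.

Lemma F_iota (g : nat -> nat) N v : step g -> g 0 = 0 -> v <= N ->
  F [seq c <- iota 0 N | g c.+1 != g c] v = g v.
Proof.
move=> st g0 vN; rewrite /F count_filter.
rewrite -(subnKC vN) iotaD count_cat.
have -> : count (predI (fun c => c < v) (fun c => g c.+1 != g c)) (iota (0 + v) (N - v)) = 0.
  apply/eqP; rewrite -leqn0 leqNgt -has_count; apply/hasP => -[c]; rewrite mem_iota /=.
  by move=> /andP [h _] /andP [h2 _]; lia.
rewrite addn0.
elim: v {vN} => [|v IH]; first by rewrite g0.
rewrite (_ : iota 0 v.+1 = iota 0 v ++ [:: v]); last by rewrite -addn1 iotaD add0n.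
rewrite count_cat /=.
have -> : count (predI (fun c => c < v.+1) (fun c => g c.+1 != g c)) (iota 0 v) =
          count (predI (fun c => c < v) (fun c => g c.+1 != g c)) (iota 0 v).
  apply: eq_in_count => c; rewrite mem_iota add0n /= => h.
  by rewrite ltnS (ltnW h) h.
rewrite IH ltnSn /= addn0; case: (st v) => h1 h2.
case: eqP => /= [->|ne]; first by rewrite addn0.
lia.
Qed.

Lemma G_contains a nu : is_partition a -> sorted (fun x y => y < x) nu ->
  all (fun x => 0 < x) nu -> G a nu -> contains a nu.
Proof.
move=> /andP [Ha _] Hnu Hpos [g [g0 [st Hw]]].
pose N := sumn a.
pose cs := [seq c <- iota 0 N | g c.+1 != g c].
have FE : forall v, v \in a -> F cs v = g v.
  by move=> v hv; apply: F_iota => //; apply: mem_sumn.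
pose rho y := find (fun v => F cs v == y) a.
have Hhas : forall y, y \in nu -> has (fun v => F cs v == y) a.
  by move=> y /Hw [v va gv]; apply/hasP; exists v => //; rewrite FE // gv.
have Hrho : forall y, y \in nu -> F cs (nth 0 a (rho y)) = y.
  by move=> y /Hhas h; apply/eqP/(nth_find 0 h).
have Hsz : forall y, y \in nu -> rho y < size a by move=> y /Hhas; rewrite has_find.
exists (map rho nu), cs; split; [|split].
- rewrite sorted_map; apply: (@sub_in_sorted _ (mem nu) _ _ _ nu _ Hnu); last exact/allP.
  move=> y1 y2 h1 h2 /= lt; rewrite ltnNge; apply/negP => le.
  have := @sorted_leq_nth nat geq (fun y x z h1 h2 => leq_trans h2 h1) (@leqnn) 0 a Ha (rho y2) (rho y1).
  rewrite !inE => /(_ (Hsz _ h2) (Hsz _ h1) le) /= hle.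
  have m1 : nth 0 a (rho y1) \in a by apply: mem_nth; apply: Hsz.
  have m2 : nth 0 a (rho y2) \in a by apply: mem_nth; apply: Hsz.
  have := step_mono st hle; rewrite -FE // -FE // !Hrho //; lia.
- by apply: sorted_filter; [exact: ltn_trans | exact: iota_ltn_sorted].
- have -> : [seq count (fun c => c < nth 0 a r) cs | r <- map rho nu] = nu.
    rewrite -map_comp -[RHS]map_id; apply/eq_in_map => y hy /=; exact: Hrho.
  exact/all_filterP.
Qed.

Definition capg (g : nat -> nat) t c u := if u <= t then minn (g u) c else c.+1.

Lemma capg_ok g t c : g 0 = 0 -> step g -> c <= g t ->
  capg g t c 0 = 0 /\ step (capg g t c).
Proof.
move=> g0 st ct; split; first by rewrite /capg leq0n g0 min0n.
move=> u; rewrite /capg; case: (ltngtP u t) => [h|h|->].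
- have := st u; lia.
- lia.
- lia.
Qed.

Lemma capg_le g t c u : u <= t -> capg g t c u = minn (g u) c.
Proof. by rewrite /capg => ->. Qed.

Lemma capg_gt g t c u : t < u -> capg g t c u = c.+1.
Proof. by rewrite /capg; case: leqP. Qed.

Lemma G_mem S S' nu : {subset S <= S'} -> G S nu -> G S' nu.
Proof.
move=> sub [g [g0 [st Hw]]]; exists g; do 2 split => //.
by move=> y /Hw [v /sub vS gv]; exists v.
Qed.

Lemma top W x n1 nt : (forall w, w \in W -> w < x) -> all (fun y => y < n1) nt ->
  G (x :: W) (n1 :: nt) ->
  G W (n1 :: nt) \/ exists g, g 0 = 0 /\ step g /\ g x = n1 /\
     forall y, y \in nt -> exists2 v, v \in W & g v = y.
Proof.
move=> HW /allP Hnt [g [g0 [st Hw]]].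
case: (Hw n1 (mem_head _ _)) => v1; rewrite inE => /orP [/eqP -> | v1W] gv1.
- right; exists g; do 3 split => //.
  move=> y hy; case: (Hw y) => [|v]; first by rewrite inE hy orbT.
  rewrite inE => /orP [/eqP -> | vW] gv; last by exists v.
  by have := Hnt _ hy; lia.
- left; exists g; do 2 split => //.
  move=> y hy; case: (Hw y hy) => v; rewrite inE => /orP [/eqP ->|vW] gv; last by exists v.
  have := step_mono st (ltnW (HW _ v1W)).
  move: hy; rewrite inE => /orP [/eqP -> | /Hnt]; first by move=> _; exists v1.
  lia.
Qed.

Lemma L3 W x n1 nt : (forall w, w \in W -> w < x) -> all (fun y => y < n1) nt ->
  G W (n1 :: nt) -> G (x :: W) (n1.+1 :: n1 :: nt).
Proof.
move=> HW /allP Hnt [g [g0 [st Hw]]].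
case: (Hw n1 (mem_head _ _)) => v1 v1W gv1.
have [c0 cst] := capg_ok g0 st (eq_leq (esym gv1)).
exists (capg g v1 n1); do 2 split => //.
move=> y; rewrite !inE => /orP [/eqP -> | /orP [/eqP -> | hy]].
- by exists x; [rewrite mem_head | rewrite capg_gt // HW].
- by exists v1; [rewrite inE v1W orbT | rewrite capg_le // gv1 minnn].
- case: (Hw y); first by rewrite inE hy orbT.
  move=> v vW gv; exists v; first by rewrite inE vW orbT.
  have yl := Hnt _ hy.
  case: (leqP v v1) => h; first by rewrite capg_le // gv; lia.
  have := step_mono st (ltnW h); lia.
Qed.

Lemma L3' W x n1 nt : (forall w, w \in W -> w < x) -> all (fun y => y < n1) nt ->
  G W (n1.+1 :: nt) -> G (x :: W) (n1.+1 :: n1 :: nt).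
Proof.
move=> HW /allP Hnt [g [g0 [st Hw]]].
case: (Hw n1.+1 (mem_head _ _)) => v1 v1W gv1.
have [c0 cst] := capg_ok (c := n1) g0 st (ltnW (eq_leq (esym gv1))).
exists (capg g v1 n1); do 2 split => //.
move=> y; rewrite !inE => /orP [/eqP -> | /orP [/eqP -> | hy]].
- by exists x; [rewrite mem_head | rewrite capg_gt // HW].
- by exists v1; [rewrite inE v1W orbT | rewrite capg_le // gv1; lia].
- case: (Hw y); first by rewrite inE hy orbT.
  move=> v vW gv; exists v; first by rewrite inE vW orbT.
  have yl := Hnt _ hy.
  case: (leqP v v1) => h; first by rewrite capg_le // gv; lia.
  have := step_mono st (ltnW h); lia.
Qed.

Lemma L2 W x n1 nt : (forall w, w \in W -> w < x) -> all (fun y => y < n1) nt ->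
  ~ G W (n1.+1 :: nt) -> G (x :: W) (n1.+1 :: nt) -> G (x.-1 :: W) (n1 :: nt).
Proof.
move=> HW Hnt nG H.
have Hnt' : all (fun y => y < n1.+1) nt by apply/allP => y /(allP Hnt); lia.
case: (top HW Hnt' H) => // -[g [g0 [st [gx Hw]]]].
case: x HW H gx => [|x] HW H gx; first by rewrite g0 in gx.
have ct : n1 <= g x.+1 by rewrite gx.
have [c0 cst] := capg_ok g0 st ct.
exists (capg g x.+1 n1); do 2 split => //.
move=> y; rewrite inE => /orP [/eqP -> | hy].
- exists x; first by rewrite mem_head.
  by rewrite capg_le //; have := st x; rewrite gx; lia.
- case: (Hw y hy) => v vW gv; exists v; first by rewrite inE vW orbT.
  have := allP Hnt _ hy; rewrite capg_le ?gv; [lia | exact: ltnW (HW _ vW)].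
Qed.

Lemma Uq W x x' n1 nt : (forall w, w \in W -> w < x) -> x < x' -> all (fun y => y < n1) nt ->
  ~ G W (n1 :: nt) -> G (x :: W) (n1 :: nt) -> G (x' :: W) (n1.+1 :: nt).
Proof.
move=> HW xx Hnt nG H.
case: (top HW Hnt H) => // -[g [g0 [st [gx Hw]]]].
have ct : n1 <= g x by rewrite gx.
have [c0 cst] := capg_ok g0 st ct.
exists (capg g x n1); do 2 split => //.
move=> y; rewrite inE => /orP [/eqP -> | hy].
- by exists x'; [rewrite mem_head | rewrite capg_gt].
- case: (Hw y hy) => v vW gv; exists v; first by rewrite inE vW orbT.
  have := allP Hnt _ hy; rewrite capg_le ?gv; [lia | exact: ltnW (HW _ vW)].
Qed.

Lemma strict_gtn s : sorted geq s -> uniq s -> sorted (fun x y => y < x) s.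
Proof.
case: s => //= x s; elim: s x => //= y s IH x /andP [xy p] /andP [nx u].
rewrite inE negb_or in nx; case/andP: nx => nxy _.
rewrite (IH y p u) andbT ltn_neqAle eq_sym nxy.
exact: xy.
Qed.

Lemma gtn_trans : transitive (fun x y : nat => y < x).
Proof. by move=> y x z h1 h2; apply: ltn_trans h2 h1. Qed.

Lemma geq_trans' : transitive geq.
Proof. by move=> y x z h1 h2; apply: leq_trans h2 h1. Qed.

Lemma split_top x t : path geq x t ->
  exists k u, t = nseq k x ++ u /\ all (fun y => y < x) u /\ sorted geq u.
Proof.
elim: t => [|y t IH] /=; first by move=> _; exists 0, [::].
move=> /andP [xy p].
case: (ltngtP y x) xy => // [lt | e] _; last subst y.
- exists 0, (y :: t); split => //; split => //=.
  rewrite lt /=; apply/allP => z zt.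
  have := allP (order_path_min geq_trans' p) z zt => /= h; exact: leq_ltn_trans h lt.
- case: (IH p) => k [u [-> [h1 h2]]]; by exists k.+1, u.
Qed.

Lemma psum_nseq m b w s : psum (nseq m b ++ s) (nseq m w) = nseq m (b + w) ++ s.
Proof.
apply: (@eq_from_nth _ 0).
  by rewrite /psum size_mkseq !size_cat !size_nseq; lia.
move=> i; rewrite /psum size_mkseq size_cat !size_nseq => hi.
rewrite nth_mkseq // !nth_cat !size_nseq !nth_nseq.
by case: (ltnP i m) => h //=; rewrite addn0.
Qed.

Lemma psum_cons1 x s : psum (x :: s) [:: 1] = x.+1 :: s.
Proof.
apply: (@eq_from_nth _ 0).
  by rewrite /psum size_mkseq /=; lia.
move=> i; rewrite /psum size_mkseq /= => hi.
rewrite nth_mkseq //; case: i hi => [|i] hi /=; first by rewrite addn1.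
by case: i hi => [|i] hi /=; rewrite addn0.
Qed.

Lemma mem_ncat m b (s : seq nat) v : 0 < m -> (v \in nseq m b ++ s) = (v \in b :: s).
Proof. by move=> m0; rewrite mem_cat mem_nseq m0 inE. Qed.

Lemma path_nseq b m s : path geq b s -> path geq b (nseq m b ++ s).
Proof. by elim: m => //= m IH h; rewrite leqnn IH. Qed.

Lemma G_pos S n1 nt : 0 < n1 -> G S (n1 :: nt) -> exists2 v, v \in S & 0 < v.
Proof.
move=> n0 [g [g0 [_ Hw]]]; case: (Hw n1 (mem_head _ _)) => v vS gv.
exists v => //; case: v vS gv => // _; rewrite g0; lia.
Qed.

Lemma le_head u w : sorted geq u -> w \in u -> w <= head 0 u.
Proof.
case: u => //= y u p; rewrite inE => /orP [/eqP -> //|wu].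
exact: (allP (order_path_min geq_trans' p) w wu).
Qed.

Lemma path_lt b u : sorted geq u -> (forall w, w \in u -> w < b) -> path geq b u.
Proof.
case: u => //= y u Su hb; rewrite Su andbT; apply: ltnW; apply: hb; exact: mem_head.
Qed.

Lemma head_lt b u : (forall w, w \in u -> w < b) -> 0 < b -> head 0 u < b.
Proof. by case: u => //= y u hb _; apply: hb; rewrite mem_head. Qed.

Unset Implicit Arguments.
Theorem mainTheorem11 (mu alpha : seq nat) :
  is_strict mu -> inQ mu (mubar mu) alpha ->
  exists b1 bs w,
    decomp mu alpha (mult_largest alpha) b1 bs w /\
    forall b1' bs' w', decomp mu alpha (mult_largest alpha) b1' bs' w' ->
      b1' = b1 /\ bs' = bs /\ w' = w.
Proof.
move=> /andP [/andP [Smu Pmu] Umu] [Pa [wa [Ca Aa]]].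
have Pa' := Pa; case/andP: Pa' => Sa Posa.
case: alpha Pa Sa Posa wa Ca Aa => [|x t] Pa Sa Posa wa Ca Aa; first by [].
have x0 : 0 < x by case/andP: Posa.
case: mu Smu Pmu Umu Ca Aa => [|m1 mt] Smu Pmu Umu Ca Aa.
  exfalso; apply: Aa; apply: G_contains => //.
  exists (fun u => minn u 1); split => //; split; first by case=> [|u].
  by move=> y; rewrite /mubar /= inE => /eqP ->; exists x; [rewrite mem_head | lia].
have Gmu := strict_gtn Smu Umu.
have Hmt : all (fun y => y < m1) mt := order_path_min gtn_trans Gmu.
have m10 : 0 < m1 by case/andP: Pmu.
rewrite /mubar /= in Aa.
have Hplus : psum (m1 :: mt) [:: 1] = m1.+1 :: mt by apply: psum_cons1.
have [k [u [tE [Hu Su]]]] := split_top Sa.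
have HW : forall w, w \in u -> w < x by move=> w /(allP Hu).
have aE : x :: t = nseq k.+1 x ++ u by rewrite tE.
have mE : mult_largest (x :: t) = k.+1.
  rewrite /mult_largest aE count_cat /= count_nseq eqxx.
  have -> : count_mem x u = 0.
    by apply/count_memPn; apply/negP => /HW; rewrite ltnn.
  rewrite addn0 /=; lia.
have Pu : all (fun x => 0 < x) u.
  by apply/allP => y yu; apply: (allP Posa); rewrite inE tE mem_cat yu !orbT.
have subA : {subset x :: t <= x :: u}.
  by move=> v; rewrite aE mem_ncat.
have subA' : {subset x :: u <= x :: t}.
  by move=> v; rewrite aE mem_ncat.
have Ga : G (x :: u) (m1 :: mt) := G_mem subA (contains_G Ca).
have Gmubar : sorted (fun x y => y < x) (m1.+1 :: m1 :: mt) by rewrite /= ltnSn.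
have Pmubar : all (fun x => 0 < x) (m1.+1 :: m1 :: mt) by move: Pmu; rewrite /= => /andP [-> ->].
have Gplus : sorted (fun x y => y < x) (m1.+1 :: mt).
  case: mt Gmu {Hmt Pmu Smu Umu Ca Aa Ga Hplus Gmubar Pmubar} => //= y mt /andP [h ->].
  by rewrite andbT; apply: ltn_trans h _.
have Pplus : all (fun x => 0 < x) (m1.+1 :: mt) by case/andP: Pmu.
have nGa : ~ G (x :: u) (m1.+1 :: m1 :: mt).
  by move=> h; apply: Aa; apply: G_contains => //; apply: G_mem h.
have nGW : ~ G u (m1 :: mt) by move=> h; apply: nGa; apply: L3.
have nGW' : ~ G u (m1.+1 :: mt) by move=> h; apply: nGa; apply: L3'.
have ex : forall n, (forall w, w \in u -> w < n) -> G (n :: u) (m1 :: mt) ->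
    exists x0, (forall w, w \in u -> w < x0) /\ x0 <= n /\ G (x0 :: u) (m1 :: mt) /\
               ~ G (x0 :: u) (m1.+1 :: mt).
  elim=> [|n IH] Hn Gn.
    case: Gn => g [g0 [_ Hw]]; case: (Hw m1 (mem_head _ _)) => v.
    rewrite inE => /orP [/eqP -> | /Hn //].
    by rewrite g0 => e; move: m10; rewrite -e.
  case: (classic (G (n.+1 :: u) (m1.+1 :: mt))) => h; last by exists n.+1.
  have Gn' : G (n :: u) (m1 :: mt) := L2 Hn Hmt nGW' h.
  case: (boolP (all (fun w => w < n) u)) => hall.
    have [x1 [h1 [h2 h3]]] := IH (fun w wu => allP hall w wu) Gn'.
    by exists x1; split => //; split => //; apply: leqW.
  exfalso; case/allPn: hall => w wu; rewrite -leqNgt => nw.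
  have := Hn w wu => wn.
  have ew : w = n by apply/eqP; rewrite eqn_leq -ltnS wn nw.
  apply: nGW; apply: G_mem Gn' => v; rewrite inE => /orP [/eqP -> | //].
  by rewrite -ew.
have [xb [HW0 [x0x [G0 nG0]]]] := ex x HW Ga.
have Hpart : forall b, (forall w, w \in u -> w < b) -> 0 < b ->
    is_partition (nseq k.+1 b ++ u).
  move=> b hb b0; rewrite /is_partition all_cat all_nseq b0 orbT Pu andbT.
  by rewrite /= path_nseq // path_lt.
have x0pos : 0 < xb.
  have [v vin vp] := G_pos m10 G0.
  move: vin; rewrite inE => /orP [/eqP <- // | /HW0 h].
  exact: leq_ltn_trans (leq0n _) h.
rewrite mE; exists xb, u, (x - xb); split.
  split; first by rewrite /is_partition Su Pu.
  split.
    exact: head_lt.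
  split.
    rewrite Hplus; split; first exact: Hpart.
    split; first by rewrite /weight /= addn_gt0 x0pos.
    split.
      apply: G_contains; [exact: Hpart | exact: Gmu | exact: Pmu | ].
      by apply: G_mem G0 => v; rewrite mem_ncat.
    by move=> /contains_G h; apply: nG0; apply: G_mem h => v; rewrite mem_ncat.
  rewrite psum_nseq aE; congr (_ ++ _); congr nseq; exact/esym/subnKC.
move=> b1' bs' w' [Pbs [hb [Q Heq]]].
rewrite psum_nseq aE in Heq.
have xe : x = b1' + w' by case: Heq.
have bse : bs' = u.
  have := congr1 (drop k.+1) Heq; rewrite !drop_size_cat ?size_nseq //.
subst bs'.
rewrite Hplus in Q; case: Q => [Pb [_ [Cb Ab]]].
have HW1 : forall w, w \in u -> w < b1'.
  by move=> w wu; apply: leq_ltn_trans hb; apply: le_head.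
have G1 : G (b1' :: u) (m1 :: mt) by apply: G_mem (contains_G Cb) => v; rewrite mem_ncat.
have nG1 : ~ G (b1' :: u) (m1.+1 :: mt).
  by move=> h; apply: Ab; apply: G_contains => //; apply: G_mem h => v; rewrite mem_ncat.
case: (ltngtP xb b1') => hc.
- by exfalso; apply: nG1; apply: (Uq HW0 hc Hmt nGW G0).
- by exfalso; apply: nG0; apply: (Uq HW1 hc Hmt nGW G1).
- by split => //; split => //; rewrite xe -hc addKn.
Qed.
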